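(* Consider the two-route traffic model with affine routing ratios described in the context, with penetration rate $\alpha\in[0,1]$ and equilibrium $\overline{x}(\alpha)$, and assume that for every $\alpha\in[0,1]$ there is no unsatisfied demand at equilibrium, i.e., $\phi R_\ell(\overline{x}(\alpha))\le F_\ell$ for $\ell=1,2$. Let $J(x)=\phi R_1(x)\frac{x_1}{B_1}+\phi R_2(x)\frac{x_2}{B_2}$, and define $\xi_1=\frac{E_1}{E_1+E_2}$, $\xi_2=\frac{E_1E_2+E_1(F_1+F_2)}{2E_1E_2+(E_1+E_2)(F_1+F_2)}$, $\overline{\alpha}=\frac{2(r_1^0(E_1+E_2)-E_1)}{(2r_1^0-1)(E_1+E_2)}$, $\overline{\phi}=\frac{E_1E_2(1-2r_1^0)}{r_1^0(E_1+E_2)-E_1}$. Suppose $E_1\ge E_2$. Then: (a) if $r_1^0<1/2$, $\alpha\mapsto J(\overline{x}(\alpha))$ is decreasing on $[0,1]$; (b) if $1/2\le r_1^0\le\xi_2$ and $\phi<\overline{\phi}$, it is increasing on $[0,1]$; (c) if $1/2\le r_1^0\le\xi_2$ and $\phi\ge\overline{\phi}$, it is decreasing on $[0,1]$; (d) if $\xi_2\le r_1^0\le\xi_1$, it is increasing on $[0,1]$; (e) if $r_1^0\ge\xi_1$, it is increasing for $\alpha\in(\overline{\alpha},1]$ and attains its minimum at $\alpha=\overline{\alpha}$. Suppose instead $E_1<E_2$. Then: (f) if $r_1^0\le\xi_1$, $\alpha\mapsto J(\overline{x}(\alpha))$ is increasing for $\alpha\in(\overline{\alpha},1]$ and attains its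 minimum at $\alpha=\overline{\alpha}$; (g) if $\xi_1<r_1^0\le\xi_2$, it is increasing on $[0,1]$; (h) if $\xi_2<r_1^0\le1/2$ and $\phi<\overline{\phi}$, it is increasing on $[0,1]$; (i) if $\xi_2<r_1^0\le1/2$ and $\phi\ge\overline{\phi}$, it is decreasing on $[0,1]$; (j) if $r_1^0>1/2$, it is decreasing on $[0,1]$.
   Context: Two routes $i=1,2$ connect an origin to a destination, with positive parameters $B_i$ (jam density), $C_i$ (critical density), $F_i$ (capacity), $C_i<B_i$, and constant demand $\phi>0$. Set $v_i=F_i/C_i$ and $E_i=v_iB_i$. The state $x=(x_1,x_2)\in\Omega:=[0,B_1]\times[0,B_2]$ evolves by $\dot x_i=\min\{\phi R_i(x),S_i(x_i)\}-D_i(x_i)$, with $S_i(x_i)=F_i$ if $x_i<C_i$, $S_i(x_i)=\frac{F_i}{B_i-C_i}(B_i-x_i)$ otherwise; $D_i(x_i)=v_ix_i$ if $x_i<C_i$, $D_i(x_i)=F_i$ otherwise. The routing ratios are affine: with penetration rate $\alpha$ and constants $r_1^0,r_2^0\ge0$, $r_1^0+r_2^0=1$, $R_1(x)=(1-\alpha)r_1^0+\alpha\big(\tfrac12+\tfrac12(\tfrac{x_2}{B_2}-\tfrac{x_1}{B_1})\big)$, $R_2(x)=(1-\alpha)r_2^0+\alpha\big(\tfrac12+\tfrac12(\tfrac{x_1}{B_1}-\tfrac{x_2}{B_2})\big)$. Standing assumptions: $\phi<F_1+F_2$; $F_i>(1-\alpha)\phi r_i^0$ for $i=1,2$; $\phi<E_i$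 for $i=1,2$. The system has, for each $\alpha$, a unique equilibrium $\overline{x}(\alpha)\in\Omega$. *)

(* Defs.v *)
From Stdlib Require Import Reals.
Open Scope R_scope.

(* Supply function S_i and demand function D_i of route i,
   with jam density B, critical density C, capacity F. *)
Definition supply (B C F x : R) : R :=
  if Rlt_dec x C then F else F / (B - C) * (B - x).

Definition demand (C F x : R) : R :=
  if Rlt_dec x C then (F / C) * x else F.

Definition Rt1 (alpha r10 B1 B2 x1 x2 : R) : R :=
  (1 - alpha) * r10 + alpha * (1/2 + 1/2 * (x2 / B2 - x1 / B1)).

Definition Rt2 (alpha r20 B1 B2 x1 x2 : R) : R :=
  (1 - alpha) * r20 + alpha * (1/2 + 1/2 * (x1 / B1 - x2 / B2)).

(* x = (x1,x2) is an equilibrium in Omega = [0,B1] x [0,B2] of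
   xdot_i = min{phi R_i(x), S_i(x_i)} - D_i(x_i). *)
Definition is_equilibrium (B1 C1 F1 B2 C2 F2 phi r10 r20 alpha x1 x2 : R) : Prop :=
  0 <= x1 <= B1 /\ 0 <= x2 <= B2 /\
  Rmin (phi * Rt1 alpha r10 B1 B2 x1 x2) (supply B1 C1 F1 x1) - demand C1 F1 x1 = 0 /\
  Rmin (phi * Rt2 alpha r20 B1 B2 x1 x2) (supply B2 C2 F2 x2) - demand C2 F2 x2 = 0.

Definition Jcost (B1 B2 phi r10 r20 alpha x1 x2 : R) : R :=
  phi * Rt1 alpha r10 B1 B2 x1 x2 * (x1 / B1) +
  phi * Rt2 alpha r20 B1 B2 x1 x2 * (x2 / B2).

Definition increasing_on (P : R -> Prop) (g : R -> R) : Prop :=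
  forall a b, P a -> P b -> a <= b -> g a <= g b.

Definition decreasing_on (P : R -> Prop) (g : R -> R) : Prop :=
  forall a b, P a -> P b -> a <= b -> g b <= g a.

Definition unit_interval (a : R) : Prop := 0 <= a <= 1.

Definition incr_after_min (abar : R) (g : R -> R) : Prop :=
  increasing_on (fun a => abar < a <= 1) g /\
  unit_interval abar /\
  (forall a, unit_interval a -> g abar <= g a).

(* Main.v *)
Require Import Defs.
From Stdlib Require Import Reals Lra Psatz.
Open Scope R_scope.

Lemma eq_free (B C F P x : R) : 0 < C -> C < B -> 0 < F ->
  Rmin P (supply B C F x) - demand C F x = 0 -> P <= F -> P = F / C * x.
Proof.
  intros hC hCB hF H hP. unfold supply, demand in H.
  destruct (Rlt_dec x C) as [hx|hx].
  - rewrite Rmin_left in H by lra. lra.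
  - pose proof (Rmin_l P (F / (B - C) * (B - x))) as h1.
    pose proof (Rmin_r P (F / (B - C) * (B - x))) as h2.
    assert (hPF : P = F) by lra.
    assert (h3 : F <= F / (B - C) * (B - x)) by lra.
    assert (h4 : F * (B - C) <= F * (B - x)).
    { replace (F * (B - x)) with (F / (B - C) * (B - x) * (B - C)) by (field; lra).
      apply Rmult_le_compat_r; lra. }
    assert (h5 : B - C <= B - x) by nra.
    assert (x = C) by lra. subst x. rewrite hPF. field. lra.
Qed.

Definition Lf E1 E2 r a := 2*(r*(E1+E2)-E1) + a*(E1+E2)*(1-2*r).
Definition Df E1 E2 P a := 2*E1*E2 + P*a*(E1+E2).
Definition Qf E1 E2 P r a := Lf E1 E2 r a / Df E1 E2 P a.
Definition Nf E1 E2 P r := E1*E2*(1-2*r) - P*(r*(E1+E2)-E1).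

Lemma key_alg (E1 E2 P a r y1 y2 : R) : 0<E1 -> 0<E2 -> 0<P -> 0<=a ->
 E1*y1 = P*((1-a)*r + a*(1/2 + 1/2*(y2-y1))) ->
 E2*y2 = P*((1-a)*(1-r) + a*(1/2 + 1/2*(y1-y2))) ->
 P*((1-a)*r + a*(1/2+1/2*(y2-y1)))*y1 + P*((1-a)*(1-r) + a*(1/2+1/2*(y1-y2)))*y2
 = P^2/(E1+E2) + P^2*E1*E2/(E1+E2) * (Qf E1 E2 P r a)^2.
Proof.
  intros h1 h2 hP ha e1 e2.
  assert (S : E1*y1 + E2*y2 = P).
  { rewrite e1, e2. field. }
  assert (hD : 0 < Df E1 E2 P a).
  { unfold Df. assert (0 < E1*E2) by (apply Rmult_lt_0_compat; lra).
    assert (0 <= P*a*(E1+E2)) by (apply Rmult_le_pos; [apply Rmult_le_pos|]; lra). lra. }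
  assert (Y1D : y1 * Df E1 E2 P a = P*(2*E2*((1-a)*r + a/2) + a*P)).
  { assert (y1 * Df E1 E2 P a - P*(2*E2*((1-a)*r + a/2) + a*P)
       = 2*E2*(E1*y1 - P*((1-a)*r + a*(1/2 + 1/2*(y2-y1)))) + P*a*(E1*y1+E2*y2-P))
      by (unfold Df; field).
    rewrite S, e1 in H. lra. }
  assert (Y1 : y1 = P*(2*E2*((1-a)*r + a/2) + a*P) / Df E1 E2 P a).
  { rewrite <- Y1D. field. lra. }
  assert (Y2 : y2 = (P - E1*y1)/E2) by (field_simplify_eq; lra).
  rewrite <- e1, <- e2. rewrite Y2, Y1. unfold Qf, Lf. unfold Df in *.
  field. lra.
Qed.

Lemma Df_pos E1 E2 P a : 0<E1 -> 0<E2 -> 0<P -> 0<=a -> 0 < Df E1 E2 P a.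
Proof.
  intros. unfold Df. assert (0 < E1*E2) by (apply Rmult_lt_0_compat; lra).
  assert (0 <= P*a*(E1+E2)) by (apply Rmult_le_pos; [apply Rmult_le_pos|]; lra). lra.
Qed.

Lemma Qdiff E1 E2 P r a b : 0<E1 -> 0<E2 -> 0<P -> 0<=a -> 0<=b ->
  Qf E1 E2 P r b - Qf E1 E2 P r a
  = 2*(E1+E2)*(b-a)*Nf E1 E2 P r / (Df E1 E2 P a * Df E1 E2 P b).
Proof.
  intros. pose proof (Df_pos E1 E2 P a H H0 H1 H2) as Da. pose proof (Df_pos E1 E2 P b H H0 H1 H3) as Db.
  unfold Qf. unfold Lf, Nf. unfold Df in *. field. split; lra.
Qed.

Lemma Q_sign_le E1 E2 P r a : 0<E1 -> 0<E2 -> 0<P -> 0<=a ->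
  Lf E1 E2 r a <= 0 -> Qf E1 E2 P r a <= 0.
Proof.
  intros. pose proof (Df_pos E1 E2 P a ltac:(lra) ltac:(lra) ltac:(lra) ltac:(lra)). unfold Qf. unfold Rdiv.
  assert (0 < / Df E1 E2 P a) by (apply Rinv_0_lt_compat; lra).
  assert (0 <= - Lf E1 E2 r a * / Df E1 E2 P a) by (apply Rmult_le_pos; lra). lra.
Qed.

Lemma Q_sign_ge E1 E2 P r a : 0<E1 -> 0<E2 -> 0<P -> 0<=a ->
  0 <= Lf E1 E2 r a -> 0 <= Qf E1 E2 P r a.
Proof.
  intros. pose proof (Df_pos E1 E2 P a ltac:(lra) ltac:(lra) ltac:(lra) ltac:(lra)). unfold Qf. unfold Rdiv.
  assert (0 < / Df E1 E2 P a) by (apply Rinv_0_lt_compat; lra).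
  apply Rmult_le_pos; lra.
Qed.

Lemma Qdiff_sign_le E1 E2 P r a b : 0<E1 -> 0<E2 -> 0<P -> 0<=a -> a<=b ->
  Nf E1 E2 P r <= 0 -> Qf E1 E2 P r b <= Qf E1 E2 P r a.
Proof.
  intros.
  assert (Hd := Qdiff E1 E2 P r a b ltac:(lra) ltac:(lra) ltac:(lra) ltac:(lra) ltac:(lra)).
  pose proof (Df_pos E1 E2 P a ltac:(lra) ltac:(lra) ltac:(lra) ltac:(lra)). pose proof (Df_pos E1 E2 P b ltac:(lra) ltac:(lra) ltac:(lra) ltac:(lra)).
  assert (0 < / (Df E1 E2 P a * Df E1 E2 P b)) by (apply Rinv_0_lt_compat; apply Rmult_lt_0_compat; lra).
  assert (0 <= 2*(E1+E2)*(b-a)) by (apply Rmult_le_pos; lra).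
  assert (2*(E1+E2)*(b-a)*Nf E1 E2 P r <= 0).
  { assert (0 <= 2*(E1+E2)*(b-a)*(- Nf E1 E2 P r)) by (apply Rmult_le_pos; lra). lra. }
  assert (Hlast : 2*(E1+E2)*(b-a)*Nf E1 E2 P r / (Df E1 E2 P a * Df E1 E2 P b) <= 0).
  { unfold Rdiv. assert (0 <= -(2*(E1+E2)*(b-a)*Nf E1 E2 P r) * / (Df E1 E2 P a * Df E1 E2 P b))
      by (apply Rmult_le_pos; lra). lra. }
  rewrite <- Hd in Hlast. lra.
Qed.

Lemma Qdiff_sign_ge E1 E2 P r a b : 0<E1 -> 0<E2 -> 0<P -> 0<=a -> a<=b ->
  0 <= Nf E1 E2 P r -> Qf E1 E2 P r a <= Qf E1 E2 P r b.
Proof.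
  intros.
  assert (Hd := Qdiff E1 E2 P r a b ltac:(lra) ltac:(lra) ltac:(lra) ltac:(lra) ltac:(lra)).
  pose proof (Df_pos E1 E2 P a ltac:(lra) ltac:(lra) ltac:(lra) ltac:(lra)). pose proof (Df_pos E1 E2 P b ltac:(lra) ltac:(lra) ltac:(lra) ltac:(lra)).
  assert (0 < / (Df E1 E2 P a * Df E1 E2 P b)) by (apply Rinv_0_lt_compat; apply Rmult_lt_0_compat; lra).
  assert (0 <= 2*(E1+E2)*(b-a)) by (apply Rmult_le_pos; lra).
  assert (0 <= 2*(E1+E2)*(b-a)*Nf E1 E2 P r) by (apply Rmult_le_pos; lra).
  assert (Hlast : 0 <= 2*(E1+E2)*(b-a)*Nf E1 E2 P r / (Df E1 E2 P a * Df E1 E2 P b))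
    by (unfold Rdiv; apply Rmult_le_pos; lra).
  rewrite <- Hd in Hlast. lra.
Qed.

Lemma sq_le_neg x y : y <= x -> x <= 0 -> x^2 <= y^2.
Proof. intros. nra. Qed.
Lemma sq_le_pos x y : 0 <= x -> x <= y -> x^2 <= y^2.
Proof. intros. nra. Qed.

Lemma pat_inc_neg E1 E2 P r a b : 0<E1 -> 0<E2 -> 0<P -> 0<=a -> a<=b ->
  Lf E1 E2 r a <= 0 -> Nf E1 E2 P r <= 0 -> (Qf E1 E2 P r a)^2 <= (Qf E1 E2 P r b)^2.
Proof.
  intros. apply sq_le_neg. apply Qdiff_sign_le; auto. apply Q_sign_le; auto.
Qed.
Lemma pat_dec_neg E1 E2 P r a b : 0<E1 -> 0<E2 -> 0<P -> 0<=a -> a<=b ->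
  Lf E1 E2 r b <= 0 -> 0 <= Nf E1 E2 P r -> (Qf E1 E2 P r b)^2 <= (Qf E1 E2 P r a)^2.
Proof.
  intros. apply sq_le_neg. apply Qdiff_sign_ge; auto. apply Q_sign_le; auto; lra.
Qed.
Lemma pat_inc_pos E1 E2 P r a b : 0<E1 -> 0<E2 -> 0<P -> 0<=a -> a<=b ->
  0 <= Lf E1 E2 r a -> 0 <= Nf E1 E2 P r -> (Qf E1 E2 P r a)^2 <= (Qf E1 E2 P r b)^2.
Proof.
  intros. apply sq_le_pos. apply Q_sign_ge; auto. apply Qdiff_sign_ge; auto.
Qed.
Lemma pat_dec_pos E1 E2 P r a b : 0<E1 -> 0<E2 -> 0<P -> 0<=a -> a<=b ->
  0 <= Lf E1 E2 r b -> Nf E1 E2 P r <= 0 -> (Qf E1 E2 P r b)^2 <= (Qf E1 E2 P r a)^2.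
Proof.
  intros. apply sq_le_pos. apply Q_sign_ge; auto; lra. apply Qdiff_sign_le; auto.
Qed.

Lemma Lf_conv E1 E2 r a : Lf E1 E2 r a = (1-a)*(2*(r*(E1+E2)-E1)) + a*(E2-E1).
Proof. unfold Lf. ring. Qed.

Lemma le_div_mul x y z : 0<z -> x <= y/z -> x*z <= y.
Proof. intros hz h. replace y with (y/z*z) by (field; lra). apply Rmult_le_compat_r; lra. Qed.
Lemma lt_div_mul x y z : 0<z -> x < y/z -> x*z < y.
Proof. intros hz h. replace y with (y/z*z) by (field; lra). apply Rmult_lt_compat_r; lra. Qed.
Lemma div_le_mul x y z : 0<z -> y/z <= x -> y <= x*z.
Proof. intros hz h. replace y with (y/z*z) by (field; lra). apply Rmult_le_compat_r; lra. Qed.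
Lemma div_lt_mul x y z : 0<z -> y/z < x -> y < x*z.
Proof. intros hz h. replace y with (y/z*z) by (field; lra). apply Rmult_lt_compat_r; lra. Qed.

Lemma lt_div_neg x y z : z<0 -> x < y/z -> y < x*z.
Proof. intros hz h. replace y with (y/z*z) by (field; lra). nra. Qed.
Lemma ge_div_neg x y z : z<0 -> y/z <= x -> x*z <= y.
Proof. intros hz h. replace y with (y/z*z) by (field; lra). nra. Qed.

Theorem proposition4
  (B1 C1 F1 B2 C2 F2 phi r10 r20 : R)
  (xbar1 xbar2 : R -> R)
  (hB1 : 0 < B1) (hC1 : 0 < C1) (hF1 : 0 < F1) (hCB1 : C1 < B1)
  (hB2 : 0 < B2) (hC2 : 0 < C2) (hF2 : 0 < F2) (hCB2 : C2 < B2)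
  (hphi : 0 < phi)
  (hr10 : 0 <= r10) (hr20 : 0 <= r20) (hr : r10 + r20 = 1)
  (hcap : phi < F1 + F2)
  (hF1r : forall alpha, unit_interval alpha -> F1 > (1 - alpha) * phi * r10)
  (hF2r : forall alpha, unit_interval alpha -> F2 > (1 - alpha) * phi * r20)
  (hE1 : phi < F1 / C1 * B1)
  (hE2 : phi < F2 / C2 * B2)
  (heq : forall alpha, unit_interval alpha ->
     is_equilibrium B1 C1 F1 B2 C2 F2 phi r10 r20 alpha (xbar1 alpha) (xbar2 alpha))
  (hnud : forall alpha, unit_interval alpha ->
     phi * Rt1 alpha r10 B1 B2 (xbar1 alpha) (xbar2 alpha) <= F1 /\
     phi * Rt2 alpha r20 B1 B2 (xbar1 alpha) (xbar2 alpha) <= F2) :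
  let E1 := F1 / C1 * B1 in
  let E2 := F2 / C2 * B2 in
  let g := fun alpha =>
    Jcost B1 B2 phi r10 r20 alpha (xbar1 alpha) (xbar2 alpha) in
  let xi1 := E1 / (E1 + E2) in
  let xi2 := (E1 * E2 + E1 * (F1 + F2)) /
             (2 * E1 * E2 + (E1 + E2) * (F1 + F2)) in
  let abar := 2 * (r10 * (E1 + E2) - E1) / ((2 * r10 - 1) * (E1 + E2)) in
  let phibar := E1 * E2 * (1 - 2 * r10) / (r10 * (E1 + E2) - E1) in
  (E1 >= E2 ->
     (r10 < 1/2 -> decreasing_on unit_interval g) /\
     (1/2 <= r10 <= xi2 -> phi < phibar -> increasing_on unit_interval g) /\
     (1/2 <= r10 <= xi2 -> phi >= phibar -> decreasing_on unit_interval g) /\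
     (xi2 <= r10 <= xi1 -> increasing_on unit_interval g) /\
     (r10 >= xi1 -> incr_after_min abar g)) /\
  (E1 < E2 ->
     (r10 <= xi1 -> incr_after_min abar g) /\
     (xi1 < r10 <= xi2 -> increasing_on unit_interval g) /\
     (xi2 < r10 <= 1/2 -> phi < phibar -> increasing_on unit_interval g) /\
     (xi2 < r10 <= 1/2 -> phi >= phibar -> decreasing_on unit_interval g) /\
     (r10 > 1/2 -> decreasing_on unit_interval g)).
Proof.
  intros E1 E2 g xi1 xi2 abar phibar.
  assert (HE1 : E1 = F1/C1*B1) by reflexivity.
  assert (HE2 : E2 = F2/C2*B2) by reflexivity.
  assert (hE1p : 0 < E1).
  { rewrite HE1. apply Rmult_lt_0_compat; [|lra]. unfold Rdiv.
    apply Rmult_lt_0_compat; [lra|apply Rinv_0_lt_compat; lra]. }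
  assert (hE2p : 0 < E2).
  { rewrite HE2. apply Rmult_lt_0_compat; [|lra]. unfold Rdiv.
    apply Rmult_lt_0_compat; [lra|apply Rinv_0_lt_compat; lra]. }
  assert (hr2 : r20 = 1 - r10) by lra.
  assert (gform : forall a, unit_interval a ->
    g a = phi^2/(E1+E2) + phi^2*E1*E2/(E1+E2) * (Qf E1 E2 phi r10 a)^2).
  { intros a ha. destruct (heq a ha) as (hx1 & hx2 & q1 & q2).
    destruct (hnud a ha) as [n1 n2].
    pose proof (eq_free B1 C1 F1 _ _ hC1 hCB1 hF1 q1 n1) as f1.
    pose proof (eq_free B2 C2 F2 _ _ hC2 hCB2 hF2 q2 n2) as f2.
    unfold g, Jcost. unfold Rt1, Rt2 in *. rewrite hr2 in *.
    destruct ha as [ha0 ha1].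
    apply key_alg; auto.
    - rewrite f1, HE1. field. split; lra.
    - rewrite f2, HE2. field. split; lra. }
  assert (HX1 : xi1 = E1/(E1+E2)) by reflexivity.
  assert (HX2 : xi2 = (E1 * E2 + E1 * (F1 + F2)) /
             (2 * E1 * E2 + (E1 + E2) * (F1 + F2))) by reflexivity.
  assert (HAB : abar = 2 * (r10 * (E1 + E2) - E1) / ((2 * r10 - 1) * (E1 + E2))) by reflexivity.
  assert (HPB : phibar = E1 * E2 * (1 - 2 * r10) / (r10 * (E1 + E2) - E1)) by reflexivity.
  clearbody g xi1 xi2 abar phibar E1 E2.

  clear heq hnud hF1r hF2r hE1 hE2 HE1 HE2.
  assert (hE : 0 < E1 + E2) by lra.
  assert (hP12 : 0 < E1 * E2) by (apply Rmult_lt_0_compat; lra).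
  assert (hFF : 0 < F1 + F2) by lra.
  assert (hD2 : 0 < 2 * E1 * E2 + (E1 + E2) * (F1 + F2)).
  { assert (0 < (E1+E2)*(F1+F2)) by (apply Rmult_lt_0_compat; lra). lra. }
  assert (hK : 0 <= phi^2*E1*E2/(E1+E2)).
  { unfold Rdiv. apply Rmult_le_pos; [|left; apply Rinv_0_lt_compat; lra].
    assert (0 < phi^2) by (apply pow_lt; lra). nra. }
  assert (INC : forall S : R -> Prop, (forall a, S a -> unit_interval a) ->
    (forall a b, S a -> S b -> a <= b -> (Qf E1 E2 phi r10 a)^2 <= (Qf E1 E2 phi r10 b)^2) ->
    increasing_on S g).
  { intros S HS HQ a b Sa Sb ab. rewrite (gform a (HS a Sa)), (gform b (HS b Sb)).
    specialize (HQ a b Sa Sb ab). apply Rplus_le_compat_l. apply Rmult_le_compat_l; lra. }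
  assert (DEC : forall S : R -> Prop, (forall a, S a -> unit_interval a) ->
    (forall a b, S a -> S b -> a <= b -> (Qf E1 E2 phi r10 b)^2 <= (Qf E1 E2 phi r10 a)^2) ->
    decreasing_on S g).
  { intros S HS HQ a b Sa Sb ab. rewrite (gform a (HS a Sa)), (gform b (HS b Sb)).
    specialize (HQ a b Sa Sb ab). apply Rplus_le_compat_l. apply Rmult_le_compat_l; lra. }
  assert (Lneg : 2*(r10*(E1+E2)-E1) <= 0 -> E2 - E1 <= 0 ->
     forall a, unit_interval a -> Lf E1 E2 r10 a <= 0).
  { intros h1 h2 a [ha0 ha1]. rewrite Lf_conv.
    assert (0 <= (1-a)*(-(2*(r10*(E1+E2)-E1)))) by (apply Rmult_le_pos; lra).
    assert (0 <= a*(-(E2-E1))) by (apply Rmult_le_pos; lra). lra. }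
  assert (Lpos : 0 <= 2*(r10*(E1+E2)-E1) -> 0 <= E2 - E1 ->
     forall a, unit_interval a -> 0 <= Lf E1 E2 r10 a).
  { intros h1 h2 a [ha0 ha1]. rewrite Lf_conv.
    assert (0 <= (1-a)*(2*(r10*(E1+E2)-E1))) by (apply Rmult_le_pos; lra).
    assert (0 <= a*(E2-E1)) by (apply Rmult_le_pos; lra). lra. }
  assert (Lshift : forall a b, Lf E1 E2 r10 b = Lf E1 E2 r10 a + (b - a)*((E1+E2)*(1-2*r10)))
    by (intros; unfold Lf; ring).
  assert (Nform : Nf E1 E2 phi r10 = E1*E2*(1-2*r10) - phi*(r10*(E1+E2)-E1)) by reflexivity.
  assert (X1le : r10 <= xi1 -> r10*(E1+E2) <= E1) by (intro h; rewrite HX1 in h; apply le_div_mul; lra).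
  assert (X1lt : xi1 < r10 -> E1 < r10*(E1+E2)) by (intro h; rewrite HX1 in h; apply div_lt_mul; lra).
  assert (X1ge : xi1 <= r10 -> E1 <= r10*(E1+E2)) by (intro h; rewrite HX1 in h; apply div_le_mul; lra).
  assert (X2le : r10 <= xi2 -> r10*(2 * E1 * E2 + (E1 + E2) * (F1 + F2)) <= E1 * E2 + E1 * (F1 + F2))
    by (intro h; rewrite HX2 in h; apply le_div_mul; lra).
  assert (X2lt : xi2 < r10 -> E1 * E2 + E1 * (F1 + F2) < r10*(2 * E1 * E2 + (E1 + E2) * (F1 + F2)))
    by (intro h; rewrite HX2 in h; apply div_lt_mul; lra).
  assert (X2ge : xi2 <= r10 -> E1 * E2 + E1 * (F1 + F2) <= r10*(2 * E1 * E2 + (E1 + E2) * (F1 + F2)))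
    by (intro h; rewrite HX2 in h; apply div_le_mul; lra).
  split.
  - intro hEE.
    split; [|split; [|split; [|split]]].
    +
      intro hr1. 
      assert (hA : r10*(E1+E2) - E1 < 0).
      { assert (r10*(E1+E2) < 1/2*(E1+E2)) by (apply Rmult_lt_compat_r; lra). lra. }
      assert (hN : 0 <= Nf E1 E2 phi r10).
      { rewrite Nform. assert (0 <= E1*E2*(1-2*r10)) by (apply Rmult_le_pos; lra).
        assert (0 <= phi*(-(r10*(E1+E2)-E1))) by (apply Rmult_le_pos; lra). lra. }
      apply DEC; auto. intros a b ha hb ab.
      apply pat_dec_neg; auto; try lra. destruct ha; lra. apply Lneg; auto; lra.
    +
      intros [hr1 hr2'] hpb.
      assert (hA : r10*(E1+E2) - E1 <= 0).
      { destruct (Rle_or_lt (r10*(E1+E2) - E1) 0) as [h|h]; auto.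
        specialize (X2le hr2').
        assert (0 < (r10*(E1+E2) - E1)*(F1+F2)) by (apply Rmult_lt_0_compat; lra).
        assert (0 <= (2*r10-1)*(E1*E2)) by (apply Rmult_le_pos; lra). lra. }
      assert (hN : Nf E1 E2 phi r10 <= 0).
      { rewrite Nform. destruct hA as [hA|hA].
        - rewrite HPB in hpb. pose proof (lt_div_neg _ _ _ hA hpb). lra.
        - rewrite hA. assert (0 <= E1*E2*(2*r10-1)) by (apply Rmult_le_pos; lra). lra. }
      apply INC; auto. intros a b ha hb ab.
      apply pat_inc_neg; auto; try lra. destruct ha; lra. apply Lneg; auto; lra.
    +
      intros [hr1 hr2'] hpb.
      assert (hA : r10*(E1+E2) - E1 <= 0).
      { destruct (Rle_or_lt (r10*(E1+E2) - E1) 0) as [h|h]; auto.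
        specialize (X2le hr2').
        assert (0 < (r10*(E1+E2) - E1)*(F1+F2)) by (apply Rmult_lt_0_compat; lra).
        assert (0 <= (2*r10-1)*(E1*E2)) by (apply Rmult_le_pos; lra). lra. }
      assert (hN : 0 <= Nf E1 E2 phi r10).
      { rewrite Nform. destruct hA as [hA|hA].
        - rewrite HPB in hpb. pose proof (ge_div_neg _ _ _ hA (Rge_le _ _ hpb)). lra.
        - specialize (X2le hr2').
          assert (hr12 : r10 = 1/2).
          { assert (hm : (r10*(E1+E2))*(F1+F2) = E1*(F1+F2)) by (rewrite <- (Rplus_0_r E1) at 2; rewrite <- hA; ring).
            assert (h3 : (2*r10 - 1)*(E1*E2) <= 0) by lra.
            destruct (Rle_or_lt r10 (1/2)) as [h4|h4]; [lra|].
            assert (0 < (2*r10-1)*(E1*E2)) by (apply Rmult_lt_0_compat; lra). lra. }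
          rewrite hA, hr12. lra. }
      apply DEC; auto. intros a b ha hb ab.
      apply pat_dec_neg; auto; try lra. destruct ha; lra. apply Lneg; auto; lra.
    +
      intros [hr1 hr2'].
      specialize (X1le hr2'). specialize (X2ge hr1).
      assert (hN : Nf E1 E2 phi r10 <= 0).
      { rewrite Nform.
        assert (0 <= (F1+F2-phi)*(E1 - r10*(E1+E2))) by (apply Rmult_le_pos; lra). lra. }
      apply INC; auto. intros a b ha hb ab.
      apply pat_inc_neg; auto; try lra. destruct ha; lra. apply Lneg; auto; lra.
    +
      intro hr1. specialize (X1ge (Rge_le _ _ hr1)).
      assert (hrh : 1/2 <= r10).
      { destruct (Rle_or_lt (1/2) r10) as [h|h]; auto.
        assert (r10*(E1+E2) < 1/2*(E1+E2)) by (apply Rmult_lt_compat_r; lra). lra. }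
      assert (hN : Nf E1 E2 phi r10 <= 0).
      { rewrite Nform. assert (0 <= E1*E2*(2*r10-1)) by (apply Rmult_le_pos; lra).
        assert (0 <= phi*(r10*(E1+E2)-E1)) by (apply Rmult_le_pos; lra). lra. }
      assert (hab : 0 <= abar <= 1 /\ Lf E1 E2 r10 abar = 0).
      { destruct hrh as [hrh|hrh].
        - assert (hden : 0 < (2 * r10 - 1) * (E1 + E2)) by (apply Rmult_lt_0_compat; lra).
          assert (hm : abar * ((2 * r10 - 1) * (E1 + E2)) = 2 * (r10 * (E1 + E2) - E1))
            by (rewrite HAB; field; lra).
          split; [split|].
          + destruct (Rle_or_lt 0 abar) as [h|h]; auto.
            assert (abar * ((2 * r10 - 1) * (E1 + E2)) < 0) by (apply Rmult_neg_pos; lra). lra.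
          + destruct (Rle_or_lt abar 1) as [h|h]; auto.
            assert (0 < (abar - 1) * ((2 * r10 - 1) * (E1 + E2))) by (apply Rmult_lt_0_compat; lra). lra.
          + unfold Lf. lra.
        - subst r10. assert (hA0 : E1 = 1/2*(E1+E2)) by lra.
          assert (abar = 0). { rewrite HAB. replace (1/2*(E1+E2)-E1) with 0 by lra. unfold Rdiv. rewrite Rmult_0_r, Rmult_0_l. reflexivity. }
          subst abar. unfold Lf. split; [lra|]. lra. }
      destruct hab as [[hab0 hab1] hL0].
      split; [|split].
      * apply INC. intros a [h1 h2]; split; lra.
        intros a b [ha1 ha2] [hb1 hb2] ab. apply pat_inc_neg; auto; try lra.
        rewrite (Lshift abar a), hL0.
        assert (0 <= (a - abar)*((E1+E2)*(2*r10-1))) by (apply Rmult_le_pos; [lra|apply Rmult_le_pos; lra]). lra.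
      * split; lra.
      * intros a ha. rewrite (gform abar), (gform a) by (auto; split; lra).
        unfold Qf at 1. rewrite hL0. unfold Rdiv at 3. rewrite Rmult_0_l.
        apply Rplus_le_compat_l. assert (0 <= Qf E1 E2 phi r10 a ^ 2) by (apply pow2_ge_0).
        replace (0 ^ 2) with 0 by ring. nra.
  - intro hEE.
    split; [|split; [|split; [|split]]].
    +
      intro hr1. specialize (X1le hr1).
      assert (hrh : r10 < 1/2).
      { destruct (Rle_or_lt (1/2) r10) as [h|h]; auto.
        assert (1/2*(E1+E2) <= r10*(E1+E2)) by (apply Rmult_le_compat_r; lra). lra. }
      assert (hN : 0 <= Nf E1 E2 phi r10).
      { rewrite Nform. assert (0 <= E1*E2*(1-2*r10)) by (apply Rmult_le_pos; lra).
        assert (0 <= phi*(E1 - r10*(E1+E2))) by (apply Rmult_le_pos; lra). lra. }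
      assert (hab : 0 <= abar <= 1 /\ Lf E1 E2 r10 abar = 0).
      { assert (hden : 0 < (1 - 2 * r10) * (E1 + E2)) by (apply Rmult_lt_0_compat; lra).
        assert (hm : abar * ((1 - 2 * r10) * (E1 + E2)) = 2 * (E1 - r10 * (E1 + E2)))
          by (rewrite HAB; field; lra).
        split; [split|].
        + destruct (Rle_or_lt 0 abar) as [h|h]; auto.
          assert (abar * ((1 - 2 * r10) * (E1 + E2)) < 0) by (apply Rmult_neg_pos; lra). lra.
        + destruct (Rle_or_lt abar 1) as [h|h]; auto.
          assert (0 < (abar - 1) * ((1 - 2 * r10) * (E1 + E2))) by (apply Rmult_lt_0_compat; lra). lra.
        + unfold Lf. lra. }
      destruct hab as [[hab0 hab1] hL0].
      split; [|split].
      * apply INC. intros a [h1 h2]; split; lra.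
        intros a b [ha1 ha2] [hb1 hb2] ab. apply pat_inc_pos; auto; try lra.
        rewrite (Lshift abar a), hL0.
        assert (0 <= (a - abar)*((E1+E2)*(1-2*r10))) by (apply Rmult_le_pos; [lra|apply Rmult_le_pos; lra]). lra.
      * split; lra.
      * intros a ha. rewrite (gform abar), (gform a) by (auto; split; lra).
        unfold Qf at 1. rewrite hL0. unfold Rdiv at 3. rewrite Rmult_0_l.
        apply Rplus_le_compat_l. assert (0 <= Qf E1 E2 phi r10 a ^ 2) by (apply pow2_ge_0).
        replace (0 ^ 2) with 0 by ring. nra.
    +
      intros [hr1 hr2']. specialize (X1lt hr1). specialize (X2le hr2').
      assert (hN : 0 <= Nf E1 E2 phi r10).
      { rewrite Nform.
        assert (0 <= (F1+F2-phi)*(r10*(E1+E2) - E1)) by (apply Rmult_le_pos; lra). lra. }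
      apply INC; auto. intros a b ha hb ab.
      apply pat_inc_pos; auto; try lra. destruct ha; lra. apply Lpos; auto; lra.
    +
      intros [hr1 hr2'] hpb. specialize (X2lt hr1).
      assert (hA : 0 < r10*(E1+E2) - E1).
      { destruct (Rle_or_lt (r10*(E1+E2) - E1) 0) as [h|h]; auto.
        assert (0 <= (E1 - r10*(E1+E2))*(F1+F2)) by (apply Rmult_le_pos; lra).
        assert (0 <= (1 - 2*r10)*(E1*E2)) by (apply Rmult_le_pos; lra). lra. }
      assert (hN : 0 <= Nf E1 E2 phi r10).
      { rewrite Nform. rewrite HPB in hpb. pose proof (lt_div_mul _ _ _ hA hpb). lra. }
      apply INC; auto. intros a b ha hb ab.
      apply pat_inc_pos; auto; try lra. destruct ha; lra. apply Lpos; auto; lra.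
    +
      intros [hr1 hr2'] hpb. specialize (X2lt hr1).
      assert (hA : 0 < r10*(E1+E2) - E1).
      { destruct (Rle_or_lt (r10*(E1+E2) - E1) 0) as [h|h]; auto.
        assert (0 <= (E1 - r10*(E1+E2))*(F1+F2)) by (apply Rmult_le_pos; lra).
        assert (0 <= (1 - 2*r10)*(E1*E2)) by (apply Rmult_le_pos; lra). lra. }
      assert (hN : Nf E1 E2 phi r10 <= 0).
      { rewrite Nform. rewrite HPB in hpb. pose proof (div_le_mul _ _ _ hA (Rge_le _ _ hpb)). lra. }
      apply DEC; auto. intros a b ha hb ab.
      apply pat_dec_pos; auto; try lra. destruct ha; lra. apply Lpos; auto; lra.
    +
      intro hr1.
      assert (hA : 0 < r10*(E1+E2) - E1).
      { assert (1/2*(E1+E2) < r10*(E1+E2)) by (apply Rmult_lt_compat_r; lra). lra. }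
      assert (hN : Nf E1 E2 phi r10 <= 0).
      { rewrite Nform. assert (0 <= E1*E2*(2*r10-1)) by (apply Rmult_le_pos; lra).
        assert (0 <= phi*(r10*(E1+E2)-E1)) by (apply Rmult_le_pos; lra). lra. }
      apply DEC; auto. intros a b ha hb ab.
      apply pat_dec_pos; auto; try lra. destruct ha; lra. apply Lpos; auto; lra.
Qed.
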